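(* Let a hyperbolic triangle have $e^a,e^b,e^c\in\mathbb{Q}$. Then $\cos\alpha,\cos\beta,\cos\gamma\in\mathbb{Q}$, and there is $r\in\mathbb{Q}$ with $\sin(A)=r\,\Delta_2$, where $\Delta_2=\sin(\alpha)\sinh(b)\sinh(c)=\sin(\beta)\sinh(a)\sinh(c)=\sin(\gamma)\sinh(a)\sinh(b)$. Moreover the following are equivalent: (i) $\Delta_2\in\mathbb{Q}$; (ii) $\sin\alpha,\sin\beta,\sin\gamma\in\mathbb{Q}$; (iii) $\sin A\in\mathbb{Q}$ (and then the triangle is a hyperbolic Heron triangle).
   Context: All triangles are non-degenerate, bounded triangles in the hyperbolic plane (curvature $-1$), with side lengths $a,b,c>0$, opposite angles $\alpha,\beta,\gamma>0$, and area $A=\pi-\alpha-\beta-\gamma$. A hyperbolic Heron triangle is one with $e^a,e^b,e^c\in\mathbb{Q}$ and $\cos,\sin$ of $\alpha,\beta,\gamma,A$ all rational. *)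

(* Defs.v *)
From Stdlib Require Import Reals QArith Qreals.
Open Scope R_scope.

Definition is_rat (x : R) : Prop := exists q : Q, x = Q2R q.

(* A non-degenerate bounded triangle in the hyperbolic plane (curvature -1),
   given (up to isometry) by its side lengths a b c and the opposite angles.
   Such a triangle exists iff a,b,c > 0 satisfy the strict triangle
   inequalities, and its angles are the angles in (0,pi) given by the
   hyperbolic law of cosines. *)
Record hyp_triangle : Type := HypTriangle {
  ht_a : R; ht_b : R; ht_c : R;
  ht_alpha : R; ht_beta : R; ht_gamma : R;
  ht_a_pos : 0 < ht_a; ht_b_pos : 0 < ht_b; ht_c_pos : 0 < ht_c;
  ht_tri_a : ht_a < ht_b + ht_c;
  ht_tri_b : ht_b < ht_a + ht_c;
  ht_tri_c : ht_c < ht_a + ht_b;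
  ht_alpha_range : 0 < ht_alpha < PI;
  ht_beta_range : 0 < ht_beta < PI;
  ht_gamma_range : 0 < ht_gamma < PI;
  ht_cos_alpha : cos ht_alpha =
    (cosh ht_b * cosh ht_c - cosh ht_a) / (sinh ht_b * sinh ht_c);
  ht_cos_beta : cos ht_beta =
    (cosh ht_a * cosh ht_c - cosh ht_b) / (sinh ht_a * sinh ht_c);
  ht_cos_gamma : cos ht_gamma =
    (cosh ht_a * cosh ht_b - cosh ht_c) / (sinh ht_a * sinh ht_b)
}.

Definition ht_area (T : hyp_triangle) : R :=
  PI - ht_alpha T - ht_beta T - ht_gamma T.

Definition Delta2 (T : hyp_triangle) : R :=
  sin (ht_alpha T) * sinh (ht_b T) * sinh (ht_c T).

Definition hyp_heron (T : hyp_triangle) : Prop :=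
  is_rat (exp (ht_a T)) /\ is_rat (exp (ht_b T)) /\ is_rat (exp (ht_c T)) /\
  is_rat (cos (ht_alpha T)) /\ is_rat (sin (ht_alpha T)) /\
  is_rat (cos (ht_beta T)) /\ is_rat (sin (ht_beta T)) /\
  is_rat (cos (ht_gamma T)) /\ is_rat (sin (ht_gamma T)) /\
  is_rat (cos (ht_area T)) /\ is_rat (sin (ht_area T)).

(* Main.v *)
Require Import Defs.
From Stdlib Require Import Reals QArith Qreals Lra Psatz.
Open Scope R_scope.

Lemma rat_Q (q : Q) : is_rat (Q2R q).
Proof. now exists q. Qed.

Lemma rat_IZR z : is_rat (IZR z).
Proof. exists (inject_Z z). unfold Q2R; simpl. field. Qed.

Lemma rat_plus x y : is_rat x -> is_rat y -> is_rat (x + y).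
Proof. intros [p ->] [q ->]. exists (p + q)%Q. now rewrite Q2R_plus. Qed.

Lemma rat_mult x y : is_rat x -> is_rat y -> is_rat (x * y).
Proof. intros [p ->] [q ->]. exists (p * q)%Q. now rewrite Q2R_mult. Qed.

Lemma rat_opp x : is_rat x -> is_rat (- x).
Proof. intros [p ->]. exists (- p)%Q. now rewrite Q2R_opp. Qed.

Lemma rat_minus x y : is_rat x -> is_rat y -> is_rat (x - y).
Proof. intros [p ->] [q ->]. exists (p - q)%Q. now rewrite Q2R_minus. Qed.

Lemma rat_inv x : is_rat x -> x <> 0 -> is_rat (/ x).
Proof.
  intros [p ->] Hn. destruct (Qeq_dec p 0) as [E|E].
  - exfalso; apply Hn. rewrite (Qeq_eqR _ _ E). unfold Q2R; simpl; field.
  - exists (/ p)%Q. now rewrite Q2R_inv.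
Qed.

Lemma rat_div x y : is_rat x -> is_rat y -> y <> 0 -> is_rat (x / y).
Proof. intros. unfold Rdiv. apply rat_mult; auto. now apply rat_inv. Qed.

Lemma rat_R1 : is_rat R1.
Proof. exists 1%Q. unfold Q2R; simpl. field. Qed.
Lemma rat_R0 : is_rat R0.
Proof. exists 0%Q. unfold Q2R; simpl. field. Qed.

Ltac nzs := repeat split; intro; lra.

Ltac rat := repeat (first [assumption | apply rat_IZR | apply rat_R1 | apply rat_R0 | apply rat_div | apply rat_plus | apply rat_minus
  | apply rat_mult | apply rat_opp | apply rat_inv | apply rat_IZR]).

Lemma hyp_facts t : 0 < t -> is_rat (exp t) ->
  is_rat (cosh t) /\ is_rat (sinh t) /\ 0 < sinh t /\ 1 < cosh t /\
  cosh t * cosh t - sinh t * sinh t = 1.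
Proof.
  intros Ht He.
  assert (E1 : 1 < exp t) by (rewrite <- exp_0; now apply exp_increasing).
  assert (Hu : exp t * / exp t = 1) by (field; lra).
  assert (Hu0 : 0 < / exp t) by (apply Rinv_0_lt_compat; lra).
  unfold cosh, sinh; rewrite exp_Ropp.
  assert (Hl : / exp t < 1) by nra.
  repeat split.
  - rat; intro; lra.
  - rat; intro; lra.
  - lra.
  - assert (H3: 0 < (exp t - 1) * (1 - / exp t)) by (apply Rmult_lt_0_compat; lra). lra.
  - transitivity (exp t * / exp t); [field; lra | exact Hu].
Qed.

Lemma ang_facts t : 0 < t < PI -> 0 < sin t /\ sin t * sin t + cos t * cos t = 1.
Proof.
  intros [H1 H2]. split. now apply sin_gt_0.
  pose proof (sin2_cos2 t). unfold Rsqr in *. lra.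
Qed.

Lemma sq_eq x y : 0 < x -> 0 < y -> x * x = y * y -> x = y.
Proof. intros. apply Rsqr_inj; unfold Rsqr; lra. Qed.

Theorem mainTheorem7 (T : hyp_triangle) :
  is_rat (exp (ht_a T)) -> is_rat (exp (ht_b T)) -> is_rat (exp (ht_c T)) ->
  (is_rat (cos (ht_alpha T)) /\ is_rat (cos (ht_beta T)) /\
   is_rat (cos (ht_gamma T))) /\
  Delta2 T = sin (ht_beta T) * sinh (ht_a T) * sinh (ht_c T) /\
  Delta2 T = sin (ht_gamma T) * sinh (ht_a T) * sinh (ht_b T) /\
  (exists r : R, is_rat r /\ sin (ht_area T) = r * Delta2 T) /\
  (is_rat (Delta2 T) <->
     (is_rat (sin (ht_alpha T)) /\ is_rat (sin (ht_beta T)) /\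
      is_rat (sin (ht_gamma T)))) /\
  ((is_rat (sin (ht_alpha T)) /\ is_rat (sin (ht_beta T)) /\
    is_rat (sin (ht_gamma T))) <-> is_rat (sin (ht_area T))) /\
  (is_rat (sin (ht_area T)) -> hyp_heron T).
Proof.
  destruct T as [a b c al be ga Ha Hb Hc T1 T2 T3 Hal Hbe Hga Cal Cbe Cga].
  unfold hyp_heron, Delta2, ht_area; simpl. intros Ea Eb Ec.
  destruct (hyp_facts a Ha Ea) as [RA [Rsa [Psa [PA Ia]]]].
  destruct (hyp_facts b Hb Eb) as [RB [Rsb [Psb [PB Ib]]]].
  destruct (hyp_facts c Hc Ec) as [RC [Rsc [Psc [PC Ic]]]].
  destruct (ang_facts al Hal) as [Pl Il].
  destruct (ang_facts be Hbe) as [Pm Im].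
  destruct (ang_facts ga Hga) as [Pn In].
  replace (PI - al - be - ga) with (PI - (al + (be + ga))) by ring.
  rewrite sin_PI_x, Rtrigo_facts.cos_pi_minus. repeat rewrite ?sin_plus, ?cos_plus.
  set (A := cosh a) in *. set (B := cosh b) in *. set (C := cosh c) in *.
  set (sa := sinh a) in *. set (sb := sinh b) in *. set (sc := sinh c) in *.
  set (ca := cos al) in *. set (cb := cos be) in *. set (cg := cos ga) in *.
  set (sl := sin al) in *. set (sm := sin be) in *. set (sn := sin ga) in *.
  clearbody A B C sa sb sc ca cb cg sl sm sn.
  assert (Kal : ca*(sb*sc) = B*C-A) by (rewrite Cal; field; nzs).
  assert (Kbe : cb*(sa*sc) = A*C-B) by (rewrite Cbe; field; nzs).
  assert (Kga : cg*(sa*sb) = A*B-C) by (rewrite Cga; field; nzs).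
  set (Dd := 1 - A*A - B*B - C*C + 2*A*B*C).
  assert (D1 : (sl*sb*sc) * (sl*sb*sc) = Dd).
  { unfold Dd.
    transitivity ((sb*sb)*(sc*sc) - (ca*(sb*sc))*(ca*(sb*sc))).
    { replace ((sl*sb*sc)*(sl*sb*sc)) with ((sl*sl)*(sb*sb)*(sc*sc)) by ring. replace (sl*sl) with (1 - ca*ca) by lra. ring. }
    rewrite Kal. replace (sb*sb) with (B*B-1) by lra. replace (sc*sc) with (C*C-1) by lra. ring. }
  assert (D2 : (sm*sa*sc) * (sm*sa*sc) = Dd).
  { unfold Dd.
    transitivity ((sa*sa)*(sc*sc) - (cb*(sa*sc))*(cb*(sa*sc))).
    { replace ((sm*sa*sc)*(sm*sa*sc)) with ((sm*sm)*(sa*sa)*(sc*sc)) by ring. replace (sm*sm) with (1 - cb*cb) by lra. ring. }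
    rewrite Kbe. replace (sa*sa) with (A*A-1) by lra. replace (sc*sc) with (C*C-1) by lra. ring. }
  assert (D3 : (sn*sa*sb) * (sn*sa*sb) = Dd).
  { unfold Dd.
    transitivity ((sa*sa)*(sb*sb) - (cg*(sa*sb))*(cg*(sa*sb))).
    { replace ((sn*sa*sb)*(sn*sa*sb)) with ((sn*sn)*(sa*sa)*(sb*sb)) by ring. replace (sn*sn) with (1 - cg*cg) by lra. ring. }
    rewrite Kga. replace (sa*sa) with (A*A-1) by lra. replace (sb*sb) with (B*B-1) by lra. ring. }
  assert (P1 : 0 < sl*sb*sc) by (apply Rmult_lt_0_compat; [apply Rmult_lt_0_compat|]; lra).
  assert (P2 : 0 < sm*sa*sc) by (apply Rmult_lt_0_compat; [apply Rmult_lt_0_compat|]; lra).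
  assert (P3 : 0 < sn*sa*sb) by (apply Rmult_lt_0_compat; [apply Rmult_lt_0_compat|]; lra).
  assert (E12 : sl*sb*sc = sm*sa*sc) by (apply sq_eq; lra).
  assert (E13 : sl*sb*sc = sn*sa*sb) by (apply sq_eq; lra).
  remember (sl*sb*sc) as D eqn:HD.
  assert (Sl : sl = D/(sb*sc)) by (rewrite HD; field; nzs).
  assert (Sm : sm = D/(sa*sc)) by (rewrite E12; field; nzs).
  assert (Sn : sn = D/(sa*sb)) by (rewrite E13; field; nzs).
  assert (Ca : ca = (B*C-A)/(sb*sc)) by exact Cal.
  assert (Cb : cb = (A*C-B)/(sa*sc)) by exact Cbe.
  assert (Cg : cg = (A*B-C)/(sa*sb)) by exact Cga.
  assert (RD : D*D = Dd) by exact D1.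
  assert (Rca : is_rat ca) by (rewrite Ca; rat; intro; nra).
  assert (Rcb : is_rat cb) by (rewrite Cb; rat; intro; nra).
  assert (Rcg : is_rat cg) by (rewrite Cg; rat; intro; nra).
  assert (RDd : is_rat Dd) by (unfold Dd; rat).
  set (r := ((A*C-B)*(A*B-C)+(B*C-A)*(A*B-C)+(B*C-A)*(A*C-B) - Dd)/(sa*sa*(sb*sb)*(sc*sc))).
  assert (Pden : 0 < sa*sa*(sb*sb)*(sc*sc)) by (repeat apply Rmult_lt_0_compat; lra).
  assert (Rr : is_rat r) by (unfold r; rat; intro; lra).
  assert (Sin : sl * (cb*cg - sm*sn) + ca*(sm*cg + cb*sn) = r * D).
  { assert (Y3 : sl*sm*sn = D*Dd/(sa*sa*(sb*sb)*(sc*sc))).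
    { rewrite Sl, Sm, Sn, <- RD. field; nzs. }
    transitivity (sl*cb*cg + ca*sm*cg + ca*cb*sn - sl*sm*sn); [ring|].
    rewrite Y3. unfold r. rewrite Sl, Sm, Sn, Ca, Cb, Cg. field; nzs. }
  assert (Rnz : r <> 0).
  { unfold r. replace ((A*C-B)*(A*B-C)+(B*C-A)*(A*B-C)+(B*C-A)*(A*C-B) - Dd)
      with ((1+A+B+C)*((A-1)*(B-1)*(C-1))) by (unfold Dd; ring).
    assert (0 < (A-1)*(B-1)*(C-1)) by (repeat apply Rmult_lt_0_compat; lra).
    assert (0 < sa*sa*(sb*sb)*(sc*sc)) by (repeat apply Rmult_lt_0_compat; lra).
    apply Rgt_not_eq. apply Rdiv_lt_0_compat; nra. }
  assert (0 < sb*sc) by (apply Rmult_lt_0_compat; lra).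
  assert (0 < sa*sc) by (apply Rmult_lt_0_compat; lra).
  assert (0 < sa*sb) by (apply Rmult_lt_0_compat; lra).
  assert (0 < sa*sa*sb*sc) by (repeat apply Rmult_lt_0_compat; lra).
  assert (0 < sc*sc*sa*sb) by (repeat apply Rmult_lt_0_compat; lra).
  assert (0 < sb*sb*sa*sc) by (repeat apply Rmult_lt_0_compat; lra).
  assert (Xmn : sm*sn = Dd/(sa*sa*sb*sc)) by (rewrite Sm, Sn, <- RD; field; nzs).
  assert (Xlm : sl*sm = Dd/(sc*sc*sa*sb)) by (rewrite Sl, Sm, <- RD; field; nzs).
  assert (Xln : sl*sn = Dd/(sb*sb*sa*sc)) by (rewrite Sl, Sn, <- RD; field; nzs).
  assert (Cos : is_rat (- (ca * (cb*cg - sm*sn) - sl*(sm*cg + cb*sn)))).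
  { replace (- (ca * (cb*cg - sm*sn) - sl*(sm*cg + cb*sn))) with
      (- (ca*cb*cg - ca*(sm*sn) - cg*(sl*sm) - cb*(sl*sn))) by ring.
    rewrite Xmn, Xlm, Xln. rat; nzs. }
  assert (Eq1 : (is_rat D <-> is_rat sl /\ is_rat sm /\ is_rat sn)).
  { split.
    - intro. rewrite Sl, Sm, Sn. repeat split; rat; nzs.
    - intros [? [? ?]]. rewrite HD. rat. }
  assert (Eq2 : (is_rat sl /\ is_rat sm /\ is_rat sn) <-> is_rat (r*D)).
  { split.
    - intro HH. apply Eq1 in HH. rat.
    - intro HH. apply Eq1. replace D with ((r*D)/r) by (field; exact Rnz). rat. }
  rewrite Sin in *.
  split; [split; [|split]; assumption|].
  split; [exact E12|]. split; [exact E13|].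
  split; [exists r; split; [exact Rr|reflexivity]|].
  split; [exact Eq1|]. split; [exact Eq2|].
  intro HH. pose proof HH as HH2. apply Eq2 in HH2. destruct HH2 as [? [? ?]].
  repeat split; assumption.
Qed.
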